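(* Let $R$ be a commutative multiplicative hyperring with scalar identity $1$, and let $\alpha$ be a good endomorphism of $R$. Then the set $\mathrm{Nil}_\alpha(R)$ of all $\alpha$-nilpotent elements of $R$ is a hyperideal of $R$.
   Context: A multiplicative hyperring is an abelian group $(R,+)$ with a hyperoperation $\circ:R\times R\to \mathcal P^*(R)$ (nonempty subsets) such that $a\circ(b\circ c)=(a\circ b)\circ c$, $a\circ(b+c)\subseteq a\circ b+a\circ c$, $(b+c)\circ a\subseteq b\circ a+c\circ a$, and $a\circ(-b)=(-a)\circ b=-(a\circ b)$. Products of subsets are unions of elementwise products, and $x^n=x\circ\cdots\circ x$ ($n$ factors). Commutative means $a\circ b=b\circ a$. A scalar identity $1$ satisfies $1\circ a=\{a\}$ for all $a$. A hyperideal is a nonempty $I\subseteq R$ closed under subtraction with $r\circ x\subseteq I$ for $r\in R$, $x\in I$. Standing assumption: all hyperideals are $\mathbf C$-hyperideals, i.e. for every finite product $A=r_1\circ\cdots\circ r_n$, $A\cap I\ne\emptyset$ implies $A\subseteq I$. A good endomorphism $\alpha$ satisfies $\alpha(x+y)=\alpha(x)+\alpha(y)$ and $\alpha(x\circ y)=\alpha(x)\circ\alpha(y)$; it is applied to sets elementwise. An element $x$ is $\alpha$-nilpotent if $0\in\alpha(x^n)$ for some integer $n>0$. *)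

(* Defs.v *)
(* the additive abelian group (R,+) is a zmodType;
   subsets of R are predicates R -> Prop; the hyperoperation is a
   relation  hm a b z  meaning  z \in a o b. *)
From HB Require Import structures.
From mathcomp Require Import all_boot all_order all_algebra.
Set Implicit Arguments. Unset Strict Implicit. Unset Printing Implicit Defensive.
Import GRing.Theory.
Local Open Scope ring_scope.

Section Hyper.
Variable R : zmodType.

Definition hset := R -> Prop.

Definition hset_eq (A B : hset) : Prop := forall z, A z <-> B z.
Definition hsubset (A B : hset) : Prop := forall z, A z -> B z.
Definition hsing (a : R) : hset := fun z => z = a.
Definition hsum (A B : hset) : hset := fun z => exists x y, A x /\ B y /\ z = x + y.
Definition hopp (A : hset) : hset := fun z => exists x, A x /\ z = - x.

Variable hm : R -> R -> hset.

Definition hprod (A B : hset) : hset := fun z => exists a b, A a /\ B b /\ hm a b z.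

Record is_mult_hyperring : Prop := {
  hm_nonempty : forall a b, exists z, hm a b z;
  hm_assoc : forall a b c, hset_eq (hprod (hsing a) (hm b c)) (hprod (hm a b) (hsing c));
  hm_distl : forall a b c, hsubset (hm a (b + c)) (hsum (hm a b) (hm a c));
  hm_distr : forall a b c, hsubset (hm (b + c) a) (hsum (hm b a) (hm c a));
  hm_oppr : forall a b, hset_eq (hm a (- b)) (hopp (hm a b));
  hm_oppl : forall a b, hset_eq (hm (- a) b) (hopp (hm a b))
}.

Definition hm_commutative : Prop := forall a b, hset_eq (hm a b) (hm b a).

Definition scalar_identity (one : R) : Prop := forall a, hset_eq (hm one a) (hsing a).

Definition hlistprod (r0 : R) (rs : seq R) : hset :=
  foldl (fun A r => hprod A (hsing r)) (hsing r0) rs.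

(* x^(n.+1) = x o ... o x with n.+1 factors *)
Fixpoint hpow (x : R) (n : nat) : hset :=
  match n with
  | 0%N => hsing x
  | n'.+1 => hprod (hpow x n') (hsing x)
  end.

Definition is_hyperideal (I : hset) : Prop :=
  (exists x, I x) /\
  (forall x y, I x -> I y -> I (x - y)) /\
  (forall r x, I x -> hsubset (hm r x) I).

Definition is_C_hyperideal (I : hset) : Prop :=
  forall r0 rs, (exists z, hlistprod r0 rs z /\ I z) -> hsubset (hlistprod r0 rs) I.

Definition good_endomorphism (alpha : R -> R) : Prop :=
  (forall x y, alpha (x + y) = alpha x + alpha y) /\
  (forall x y, hset_eq (fun z => exists w, hm x y w /\ z = alpha w) (hm (alpha x) (alpha y))).

Definition alpha_nilpotent (alpha : R -> R) (x : R) : Prop :=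
  exists n : nat, (0 < n)%N /\ exists w, hpow x n.-1 w /\ alpha w = 0.

Definition Nil_alpha (alpha : R -> R) : hset := fun x => alpha_nilpotent alpha x.

End Hyper.

(* Main.v *)
Require Import Defs.
From mathcomp Require Import all_boot all_order all_algebra zify.
Set Implicit Arguments. Unset Strict Implicit.
Import GRing.Theory.
Local Open Scope ring_scope.

Inductive hsumcl (R : zmodType) (G : R -> Prop) : R -> Prop :=
 | sc0 : hsumcl G 0
 | scA c t : hsumcl G c -> G t -> hsumcl G (c + t).

Lemma hsumcl_alpha (R : zmodType) (G : R -> Prop) (alpha : R -> R)
  (add : forall x y, alpha (x + y) = alpha x + alpha y)
  (a0 : alpha 0 = 0) (HG : forall t, G t -> alpha t = 0) c :
  hsumcl G c -> alpha c = 0.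
Proof. elim=> [|c' t _ IH Gt] //; by rewrite add IH HG // addr0. Qed.

Lemma hpow_iter (R : zmodType) (hm : R -> R -> R -> Prop) x n :
  hpow hm x n = iter n (fun B => hprod hm B (hsing x)) (hsing x).
Proof. by elim: n => //= n ->. Qed.


Lemma foldl_nseq_iter (R : zmodType) (hm : R -> R -> R -> Prop) x n (A : hset R) :
  foldl (fun B r => hprod hm B (hsing r)) A (nseq n x)
  = iter n (fun B => hprod hm B (hsing x)) A.
Proof. by elim: n A => //= n IH A; rewrite IH -iterSr. Qed.

Lemma hpow_list (R : zmodType) (hm : R -> R -> R -> Prop) x n :
  hpow hm x n = hlistprod hm x (nseq n x).
Proof. by rewrite hpow_iter /hlistprod foldl_nseq_iter. Qed.

Definition Px (R : zmodType) (hm : R -> R -> R -> Prop) (x : R) (i : nat) (u : R) : Prop :=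
  match i with 0%N => True | j.+1 => exists a b, hpow hm x j b /\ hm a b u end.

Theorem mainTheorem10 (R : zmodType) (hm : R -> R -> R -> Prop)
  (HR : is_mult_hyperring hm) (Hcomm : hm_commutative hm)
  (one : R) (Hone : scalar_identity hm one)
  (HC : forall I : hset R, is_hyperideal hm I -> is_C_hyperideal hm I)
  (alpha : R -> R) (Halpha : good_endomorphism hm alpha) :
  is_hyperideal hm (Nil_alpha hm alpha).
Proof.
case: HR => hne hass hdl hdr hor hol.
case: Halpha => aadd amul.
have a0 : alpha 0 = 0 by apply/(addrI (alpha 0)); rewrite -aadd !addr0.
have aN : forall x, alpha (-x) = - alpha x.
  move=> x; have := aadd x (-x); rewrite subrr a0 => /esym/eqP.
  by rewrite addrC addr_eq0 => /eqP.
have AL : forall a b c v w, hm b c v -> hm a v w -> exists u, hm a b u /\ hm u c w.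
  move=> a b c v w Hv Hw; have [H _] := hass a b c w.
  have [u [c' [Hu [Hc Hw']]]] : hprod hm (hm a b) (hsing c) w by apply: H; exists a, v.
  by red in Hc; subst c'; exists u.
have AR : forall a b c u w, hm a b u -> hm u c w -> exists v, hm b c v /\ hm a v w.
  move=> a b c u w Hu Hw; have [_ H] := hass a b c w.
  have [a' [v [Ha [Hv Hw']]]] : hprod hm (hsing a) (hm b c) w by apply: H; exists u, c.
  by red in Ha; subst a'; exists v.
have one_l : forall a, hm one a a := fun a => proj2 (Hone a a) erefl.
have one_l_eq : forall a z, hm one a z -> z = a := fun a z H => proj1 (Hone a z) H.
have zero_r : forall a w, hm a 0 w -> w = 0.
  move=> a w; rewrite -(subrr one) => /hdl [p [q [Hp [Hq ->]]]].
  rewrite (one_l_eq _ _ (proj1 (Hcomm _ _ _) Hp)).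
  case: (proj1 (hor a one q) Hq) => p' [Hp' ->].
  by rewrite (one_l_eq _ _ (proj1 (Hcomm _ _ _) Hp')) !subrr.
have zero_l : forall a w, hm 0 a w -> w = 0.
  by move=> a w /(Hcomm 0 a w) /zero_r.
have kerabs : forall r a w, alpha a = 0 -> hm r a w -> alpha w = 0.
  move=> r a w Ha Hw.
  have := proj1 (amul r a (alpha w)) (ex_intro _ w (conj Hw erefl)).
  by rewrite Ha => /zero_r.
have HK : is_hyperideal hm (fun z => alpha z = 0).
  split; first by exists 0.
  split; first by move=> x y Hx Hy; rewrite aadd aN Hx Hy subrr.
  move=> r x Hx w; exact: kerabs.
have CK := HC _ HK.
have powK : forall x n w0 w, hpow hm x n w0 -> alpha w0 = 0 -> hpow hm x n w -> alpha w = 0.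
  move=> x n w0 w H0 A0 Hw; rewrite hpow_list in H0 Hw.
  exact: (CK x (nseq n x) (ex_intro _ w0 (conj H0 A0)) w Hw).
have powK' : forall x n w0, hpow hm x n w0 -> alpha w0 = 0 ->
    forall j w, (n <= j)%N -> hpow hm x j w -> alpha w = 0.
  move=> x n w0 H0 A0; elim=> [|j IH] w.
    by rewrite leqn0 => /eqP Hn; subst n; exact: powK H0 A0.
  rewrite leq_eqVlt => /orP [/eqP Hn|]; first by subst n; exact: powK H0 A0.
  rewrite ltnS => Hj [b [c [Hb [Hc Hw]]]]; red in Hc; subst c.
  exact: (kerabs x b w (IH b Hj Hb) (proj1 (Hcomm b x w) Hw)).
have hpow_ne : forall x n, exists w, hpow hm x n w.
  move=> x; elim=> [|n [u Hu]]; first by exists x.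
  have [w Hw] := hne u x; by exists w, u, x.
have PxT : forall x i u t w, Px hm x i u -> hm u t w -> Px hm x i w.
  move=> x [|i] u t w //= [a [b [Hb Hu]]] Hw.
  have [v [Hv Hw']] := AR b a t u w (proj1 (Hcomm _ _ _) Hu) Hw.
  exists v, b; split => //; exact: (proj1 (Hcomm _ _ _) Hw').
have PxX : forall x i u w, Px hm x i u -> hm u x w -> Px hm x i.+1 w.
  move=> x [|i] u w /=; first by move=> _ Hw; exists u, x.
  move=> [a [b [Hb Hu]]] Hw.
  have [v [Hv Hw']] := AR a b x u w Hu Hw.
  by exists a, v; split => //; exists b, x.
have PxN : forall x i u, Px hm x i u -> Px hm x i (-u).
  move=> x [|i] u //= [a [b [Hb Hu]]]; exists (-a), b; split => //.
  exact: (proj2 (hol a b (-u)) (ex_intro _ u (conj Hu erefl))).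
have PxK : forall x n w0, hpow hm x n w0 -> alpha w0 = 0 ->
    forall i u, (n < i)%N -> Px hm x i u -> alpha u = 0.
  move=> x n w0 H0 A0 [|i] u //= Hi [a [b [Hb Hu]]].
  exact: (kerabs a b u (powK' x n w0 H0 A0 i b Hi Hb) Hu).
split; first by exists 0, 1%N; split => //; exists 0.
split.
- move=> x y [n [n0 [w0 [Hw0 A0]]]] [m [m0 [v0 [Hv0 B0]]]].
  pose G k t := exists i, (i <= k.+1)%N /\ Px hm x i t /\ Px hm y (k.+1 - i) t.
  have step : forall k w, hpow hm (x - y) k w -> hsumcl (G k) w.
    elim=> [|k IH] w.
      move=> ->; rewrite -[x - y]add0r addrA.
      apply: scA; [apply: scA; [exact: sc0|] |].
        by exists 1%N; split => //; split => //; exists one, x.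
      exists 0%N; split => //; split => //; apply: PxN; by exists one, y.
    move=> [u [c [Hu [Hc Hw]]]]; red in Hc; subst c.
    have Su := IH u Hu; clear Hu.
    elim: Su w Hw => [|c' t Sc IHc Gt] w Hw.
      rewrite (zero_l _ _ Hw); exact: sc0.
    case: (hdr _ _ _ _ Hw) => w1 [w2 [H1 [H2 ->]]].
    case: (hdl _ _ _ _ H2) => v1 [v2' [Hv1 [Hv2' ->]]].
    case: (proj1 (hor _ _ _) Hv2') => v2 [Hv2 ->].
    have [i [Hi [Pxi Pyi]]] := Gt.
    rewrite addrA; apply: scA; [apply: scA; [exact: IHc|] |].
      exists i.+1; split => //; split; first exact: PxX Pxi Hv1.
      rewrite subSS; exact: PxT Pyi Hv1.
    exists i; split; first exact: leqW.
    split; first exact/PxN/(PxT _ _ _ _ _ Pxi Hv2).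
    rewrite subSn //; exact/PxN/(PxX _ _ _ _ Pyi Hv2).
  pose k := (n.-1 + m.-1)%N.
  have [w Hw] := hpow_ne (x - y) k.
  exists k.+1; split => //; exists w; split => //.
  apply: (hsumcl_alpha aadd a0 _ (step _ _ Hw)) => t [i [Hi [Pxi Pyi]]].
  case: (ltnP n.-1 i) => H; first exact: (PxK x _ w0 Hw0 A0 i t H Pxi).
  apply: (PxK y _ v0 Hv0 B0 (k.+1 - i)%N t _ Pyi).
  rewrite /k; lia.
- move=> r x [n [n0 [w0 [Hw0 A0]]]] z Hz.
  have P : forall k w, hpow hm z k w -> Px hm x k.+1 w.
    elim=> [|k IH] w; first by move=> ->; exists r, x.
    move=> [u [c [Hu [Hc Hw]]]]; red in Hc; subst c.
    have [v [Hv Hw']] := AL u r x z w Hz Hw.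
    exact: PxX (PxT _ _ _ _ _ (IH u Hu) Hv) Hw'.
  have [w Hw] := hpow_ne z n.-1.
  exists n; split => //; exists w; split => //.
  have := P _ _ Hw; rewrite prednK // => Pw.
  apply: (PxK x _ w0 Hw0 A0 n w _ Pw).
  by rewrite prednK.
Qed.
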